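(* The Kelvin circulation theorem for the current alone is given by, \begin{align} \frac{d}{dt}\oint_{c(\mathbf{\widehat v})} \mathbf{\widehat{v}}\cdot d\mathbf{r} = - \oint_{c(\mathbf{\widehat v})} \frac{1}{\rho}dp - d \frac{|\mathbf{\widehat{v}}|^2}{2} \,. \end{align}
   Context: Setting: a 2D free surface model in which the horizontal current velocity $\mathbf{\widehat v}(\mathbf{r},t)$ transports a vertical wave elevation $\zeta(\mathbf{r},t)$ with vertical velocity $\widehat{w} = \partial_t\zeta + \mathbf{\widehat{v}}\cdot\nabla_{\mathbf{r}}\zeta$, derived from Hamilton's principle with Lagrangian $\ell=\int_{\cal D}\Big( \tfrac{1}{2}\big( |\mathbf{\widehat{v}}|^2 + \sigma^2\widehat w^2 \big) - \tfrac{\rho_{ref}}{\rho} \tfrac{\zeta^2}{2Fr^2} \Big) D\rho - p(D-1)\,d^2r$, with constants $\sigma^2, Fr^2,\rho_{ref}$, advected areal density $D\,d^2r$ and buoyancy $\rho$, and pressure $p$ enforcing $D=1$ ($\mathrm{div}\,\mathbf{\widehat v}=0$). The full Kelvin theorem for this model reads $\frac{d}{dt}\oint_{c(\mathbf{\widehat v})} ( \mathbf{\widehat{v}}\cdot d\mathbf{r} + \sigma^2\widehat{w}\,d\zeta) = \oint_{c(\mathbf{\widehat v})} -\rho^{-1} d\widetilde p + d\widetilde\varpi$ with $\widetilde p = p+\rho_{ref}\zeta^2/(2Fr^2)$, $\widetilde\varpi=\tfrac12(|\mathbf{\widehat v}|^2+\sigma^2\widehat w^2)$, and the wave equations $(\partial_t+\mathbf{\widehat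 v}\cdot\nabla)\widehat w = -\rho_{ref}\zeta/(\sigma^2Fr^2\rho)$, $(\partial_t+\mathbf{\widehat v}\cdot\nabla)\zeta=\widehat w$. The loop $c(\mathbf{\widehat v})$ moves with the horizontal flow. *)

(* Defs.v *)
From Stdlib Require Import Reals.
From Coquelicot Require Import Coquelicot.
Open Scope R_scope.

(* A (scalar) space-time field on the horizontal plane: f x y t. *)
Definition field := R -> R -> R -> R.

Definition unc3 (f : field) (q : R * R * R) : R :=
  f (fst (fst q)) (snd (fst q)) (snd q).

Definition d_x (f : field) : field := fun x y t => Derive (fun x' => f x' y t) x.
Definition d_y (f : field) : field := fun x y t => Derive (fun y' => f x y' t) y.
Definition d_t (f : field) : field := fun x y t => Derive (fun t' => f x y t') t.

Definition C1_field (f : field) : Prop :=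
  forall q : R * R * R,
    ex_filterdiff (unc3 f) (locally q) /\
    continuous (unc3 (d_x f)) q /\ continuous (unc3 (d_y f)) q /\
    continuous (unc3 (d_t f)) q.

Definition C2_field (f : field) : Prop :=
  C1_field f /\ C1_field (d_x f) /\ C1_field (d_y f) /\ C1_field (d_t f).

(* two-parameter maps (t, s) for the moving loop *)
Definition unc2 (g : R -> R -> R) (q : R * R) : R := g (fst q) (snd q).
Definition p_t (g : R -> R -> R) : R -> R -> R := fun t s => Derive (fun t' => g t' s) t.
Definition p_s (g : R -> R -> R) : R -> R -> R := fun t s => Derive (fun s' => g t s') s.

Definition C1_map2 (g : R -> R -> R) : Prop :=
  forall q : R * R,
    ex_filterdiff (unc2 g) (locally q) /\
    continuous (unc2 (p_t g)) q /\ continuous (unc2 (p_s g)) q.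

Definition C2_map2 (g : R -> R -> R) : Prop :=
  C1_map2 g /\ C1_map2 (p_t g) /\ C1_map2 (p_s g).

Definition mat_deriv (v1 v2 f : field) : field :=
  fun x y t => d_t f x y t + v1 x y t * d_x f x y t + v2 x y t * d_y f x y t.

Definition xcoord : field := fun x _ _ => x.
Definition ycoord : field := fun _ y _ => y.
Definition one_field : field := fun _ _ _ => 1.

(* Loop integral  \oint_{c(t)} f dg  along the loop c(t) = s |-> (X t s, Y t s),
   s in [0,1]:  int_0^1 f(c(t,s),t) d/ds[ g(c(t,s),t) ] ds. *)
Definition oint (X Y : R -> R -> R) (t : R) (f g : field) : R :=
  RInt (fun s => f (X t s) (Y t s) t * Derive (fun s' => g (X t s') (Y t s') t) s) 0 1.

(* Main.v *)
Require Import Defs.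
From Stdlib Require Import Reals Lra.
From Coquelicot Require Import Coquelicot.
Open Scope R_scope.

Lemma filterdiff_pair3 (a b c : R -> R) x da db dc :
  is_derive a x da -> is_derive b x db -> is_derive c x dc ->
  filterdiff (fun u : R => ((a u, b u), c u) : (R*R)*R) (locally x)
    (fun y : R => ((y*da, y*db), y*dc) : (R*R)*R).
Proof.
  intros Ha Hb Hc.
  set (h := fun (p : prod_NormedModule R_AbsRing R_NormedModule R_NormedModule) (q : R_NormedModule) =>
              (p, q) : prod_NormedModule R_AbsRing (prod_NormedModule R_AbsRing R_NormedModule R_NormedModule) R_NormedModule).
  set (h2 := fun (p : R_NormedModule) (q : R_NormedModule) =>
              (p, q) : prod_NormedModule R_AbsRing R_NormedModule R_NormedModule).
  assert (Hab : filterdiff (fun u : R => h2 (a u) (b u)) (locally x)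
                  (fun y : R => h2 (scal y da) (scal y db))).
  { apply (filterdiff_comp'_2 a b h2 x); auto.
    apply filterdiff_ext with (f := fun t => t).
    { intros [p q]; reflexivity. }
    apply filterdiff_ext_lin with (l1 := fun t => t).
    { apply filterdiff_linear, is_linear_id. }
    intros [p q]; reflexivity. }
  pose proof (filterdiff_comp'_2 (fun u => h2 (a u) (b u)) c h x _ _ h Hab Hc) as H.
  assert (H' : filterdiff (fun t => h (fst t) (snd t)) (locally (h2 (a x) (b x), c x)) (fun t => h (fst t) (snd t))).
  { apply filterdiff_ext with (f := fun t => t).
    { intros [p q]; reflexivity. }
    apply filterdiff_ext_lin with (l1 := fun t => t).
    { apply filterdiff_linear, is_linear_id. }
    intros [p q]; reflexivity. }
  specialize (H H').
  eapply filterdiff_ext_lin.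
  - eapply filterdiff_ext; [|exact H]. intros; reflexivity.
  - intros y; reflexivity.
Qed.

Lemma chainL (f : field) l (a b c : R -> R) x da db dc :
  filterdiff (unc3 f) (locally ((a x, b x), c x)) l ->
  is_derive a x da -> is_derive b x db -> is_derive c x dc ->
  is_derive (fun u => f (a u) (b u) (c u)) x (l ((da, db), dc)).
Proof.
  intros Hf Ha Hb Hc.
  pose proof (filterdiff_pair3 a b c x da db dc Ha Hb Hc) as P.
  pose proof (filterdiff_comp' _ (unc3 f) x _ l P Hf) as H.
  unfold is_derive.
  eapply filterdiff_ext_lin.
  - eapply filterdiff_ext; [|exact H]. intros; reflexivity.
  - intros y. simpl.
    assert (Hl := proj1 Hf).
    rewrite <- (linear_scal l Hl). reflexivity.
Qed.

Lemma is_derive_id' (x : R) : is_derive (fun u : R => u) x 1.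
Proof. exact (@is_derive_id R_AbsRing x). Qed.

Lemma is_derive_const' (c x : R) : is_derive (fun _ : R => c) x 0.
Proof. exact (@is_derive_const R_AbsRing R_NormedModule c x). Qed.

Lemma partials_of (f : field) l q :
  filterdiff (unc3 f) (locally q) l ->
  d_x f (fst (fst q)) (snd (fst q)) (snd q) = l ((1, 0), 0) /\
  d_y f (fst (fst q)) (snd (fst q)) (snd q) = l ((0, 1), 0) /\
  d_t f (fst (fst q)) (snd (fst q)) (snd q) = l ((0, 0), 1).
Proof.
  destruct q as [[q1 q2] q3]; simpl. intros Hf.
  split; [|split].
  - apply is_derive_unique.
    apply (chainL f l (fun u => u) (fun _ => q2) (fun _ => q3) q1 1 0 0); auto.
    apply is_derive_id'. apply is_derive_const'. apply is_derive_const'.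
  - apply is_derive_unique.
    apply (chainL f l (fun _ => q1) (fun u => u) (fun _ => q3) q2 0 1 0); auto.
    apply is_derive_const'. apply is_derive_id'. apply is_derive_const'.
  - apply is_derive_unique.
    apply (chainL f l (fun _ => q1) (fun _ => q2) (fun u => u) q3 0 0 1); auto.
    apply is_derive_const'. apply is_derive_const'. apply is_derive_id'.
Qed.

Lemma chain3 (f : field) (a b c : R -> R) x da db dc :
  ex_filterdiff (unc3 f) (locally ((a x, b x), c x)) ->
  is_derive a x da -> is_derive b x db -> is_derive c x dc ->
  is_derive (fun u => f (a u) (b u) (c u)) x
    (d_x f (a x) (b x) (c x) * da + d_y f (a x) (b x) (c x) * db
     + d_t f (a x) (b x) (c x) * dc).
Proof.
  intros [l Hf] Ha Hb Hc.
  destruct (partials_of f l _ Hf) as [E1 [E2 E3]]. simpl in E1, E2, E3.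
  rewrite E1, E2, E3.
  assert (Hl := proj1 Hf).
  replace (l ((1,0),0) * da + l ((0,1),0) * db + l ((0,0),1) * dc)
    with (l ((da, db), dc)).
  - apply chainL; auto.
  - replace ((da, db), dc) with
      (plus (plus (scal da ((1,0),0)) (scal db ((0,1),0))) (scal dc ((0,0),1))
        : prod_NormedModule R_AbsRing (prod_NormedModule R_AbsRing R_NormedModule R_NormedModule) R_NormedModule).
    + rewrite !(linear_plus l Hl), !(linear_scal l Hl).
      simpl. unfold plus, scal; simpl. unfold mult; simpl. ring.
    + unfold plus, scal; simpl. unfold plus, scal, mult; simpl.
      do 3 (cbv [prod_plus prod_scal fst snd]; unfold plus, scal, mult; simpl).
      f_equal; try f_equal; ring.
Qed.

Lemma cont_pair {U V W : UniformSpace} (f : U -> V) (g : U -> W) x :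
  continuous f x -> continuous g x -> continuous (fun y => (f y, g y)) x.
Proof.
  intros Hf Hg. apply (continuous_comp_2 f g pair); auto.
  apply continuous_ext with (f := fun y => y).
  - intros [a b]; reflexivity.
  - apply continuous_id.
Qed.

Lemma C1_map2_cont g q : C1_map2 g -> continuous (unc2 g) q.
Proof. intros H. exact (@filterdiff_continuous R_AbsRing (prod_NormedModule R_AbsRing R_NormedModule R_NormedModule) R_NormedModule (unc2 g) q (proj1 (H q))). Qed.

Lemma C1_field_cont f q : C1_field f -> continuous (unc3 f) q.
Proof. intros H. exact (@filterdiff_continuous R_AbsRing (prod_NormedModule R_AbsRing (prod_NormedModule R_AbsRing R_NormedModule R_NormedModule) R_NormedModule) R_NormedModule (unc3 f) q (proj1 (H q))). Qed.

Definition comp2 (X Y : R -> R -> R) (f : field) : R -> R -> R :=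
  fun t s => f (X t s) (Y t s) t.

Lemma cont_comp2 (X Y : R -> R -> R) (f : field) q :
  (forall q', continuous (unc3 f) q') -> C1_map2 X -> C1_map2 Y ->
  continuous (unc2 (comp2 X Y f)) q.
Proof.
  intros Hf HX HY.
  apply continuous_ext with
    (f := fun q0 : R*R => unc3 f ((unc2 X q0, unc2 Y q0), fst q0)).
  { intros [a b]; reflexivity. }
  apply continuous_comp with (g := unc3 f).
  - apply cont_pair. apply cont_pair.
    + apply C1_map2_cont; auto.
    + apply C1_map2_cont; auto.
    + destruct q; apply continuous_fst.
  - apply Hf.
Qed.

Lemma cont_mult2 (f g : R -> R -> R) q :
  continuous (unc2 f) q -> continuous (unc2 g) q ->
  continuous (unc2 (fun t s => f t s * g t s)) q.
Proof. intros. apply (continuous_mult (unc2 f) (unc2 g)); auto. Qed.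

Lemma cont_plus2 (f g : R -> R -> R) q :
  continuous (unc2 f) q -> continuous (unc2 g) q ->
  continuous (unc2 (fun t s => f t s + g t s)) q.
Proof. intros. apply (continuous_plus (unc2 f) (unc2 g)); auto. Qed.

Lemma cont_const2 (c : R) q : continuous (unc2 (fun _ _ => c)) q.
Proof. apply continuous_const. Qed.

Lemma cont_inv2 (f : R -> R -> R) q :
  continuous (unc2 f) q -> unc2 f q <> 0 ->
  continuous (unc2 (fun t s => / f t s)) q.
Proof.
  intros Hc Hn. unfold unc2 at 1.
  apply continuous_comp with (f := unc2 f) (g := fun x => / x); auto.
  apply continuous_Rinv; auto.
Qed.

Lemma cont_slice (h : R -> R -> R) t s :
  continuous (unc2 h) (t, s) -> continuous (fun s' => h t s') s.
Proof.
  intros H.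
  apply continuous_comp with (f := fun s' : R => (t, s')) (g := unc2 h); auto.
  apply cont_pair. apply continuous_const. apply continuous_id.
Qed.

Lemma filterdiff_pair2 (a b : R -> R) x da db :
  is_derive a x da -> is_derive b x db ->
  filterdiff (fun u : R => (a u, b u) : R*R) (locally x)
    (fun y : R => (y*da, y*db) : R*R).
Proof.
  intros Ha Hb.
  set (h2 := fun (p : R_NormedModule) (q : R_NormedModule) =>
              (p, q) : prod_NormedModule R_AbsRing R_NormedModule R_NormedModule).
  assert (Hab : filterdiff (fun u : R => h2 (a u) (b u)) (locally x)
                  (fun y : R => h2 (scal y da) (scal y db))).
  { apply (filterdiff_comp'_2 a b h2 x); auto.
    apply filterdiff_ext with (f := fun t => t).
    { intros [p q]; reflexivity. }
    apply filterdiff_ext_lin with (l1 := fun t => t).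
    { apply filterdiff_linear, is_linear_id. }
    intros [p q]; reflexivity. }
  exact Hab.
Qed.

Lemma ex_derive_s (g : R -> R -> R) t s :
  ex_filterdiff (unc2 g) (locally (t, s)) -> ex_derive (fun s' => g t s') s.
Proof.
  intros [l Hl].
  pose proof (filterdiff_pair2 (fun _ => t) (fun u => u) s 0 1
                (is_derive_const' t s) (is_derive_id' s)) as P.
  pose proof (filterdiff_comp' _ (unc2 g) s _ l P Hl) as H.
  exists (l (0, 1)).
  unfold is_derive.
  eapply filterdiff_ext_lin.
  - eapply filterdiff_ext; [|exact H]. intros; reflexivity.
  - intros y. simpl.
    rewrite <- (linear_scal l (proj1 Hl)). unfold scal; simpl.
    unfold prod_scal; simpl. unfold scal; simpl. unfold mult; simpl.
    f_equal; f_equal; ring.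
Qed.

Lemma ex_derive_t (g : R -> R -> R) t s :
  ex_filterdiff (unc2 g) (locally (t, s)) -> ex_derive (fun t' => g t' s) t.
Proof.
  intros [l Hl].
  pose proof (filterdiff_pair2 (fun u => u) (fun _ => s) t 1 0
                (is_derive_id' t) (is_derive_const' s t)) as P.
  pose proof (filterdiff_comp' _ (unc2 g) t _ l P Hl) as H.
  exists (l (1, 0)).
  unfold is_derive.
  eapply filterdiff_ext_lin.
  - eapply filterdiff_ext; [|exact H]. intros; reflexivity.
  - intros y. simpl.
    rewrite <- (linear_scal l (proj1 Hl)). unfold scal; simpl.
    unfold prod_scal; simpl. unfold scal; simpl. unfold mult; simpl.
    f_equal; f_equal; ring.
Qed.

Lemma der_ps (g : R -> R -> R) t s :
  C1_map2 g -> is_derive (fun s' => g t s') s (p_s g t s).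
Proof. intros H. apply Derive_correct, ex_derive_s, H. Qed.

Lemma der_pt (g : R -> R -> R) t s :
  C1_map2 g -> is_derive (fun t' => g t' s) t (p_t g t s).
Proof. intros H. apply Derive_correct, ex_derive_t, H. Qed.

Lemma is_derive_val (f : R -> R) (x l l' : R) : is_derive f x l -> l = l' -> is_derive f x l'.
Proof. intros H E; subst; exact H. Qed.

Lemma comp_ds (f : field) (X Y : R -> R -> R) t s :
  C1_field f -> C1_map2 X -> C1_map2 Y ->
  is_derive (fun s' => f (X t s') (Y t s') t) s
    (d_x f (X t s) (Y t s) t * p_s X t s + d_y f (X t s) (Y t s) t * p_s Y t s).
Proof.
  intros Hf HX HY.
  eapply is_derive_val.
  - exact (chain3 f (fun s' => X t s') (fun s' => Y t s') (fun _ => t) s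
             (p_s X t s) (p_s Y t s) 0 (proj1 (Hf ((X t s, Y t s), t)))
             (der_ps X t s HX) (der_ps Y t s HY) (is_derive_const' t s)).
  - cbv beta. ring.
Qed.

Lemma comp_dt (f v1 v2 : field) (X Y : R -> R -> R) t s :
  C1_field f ->
  is_derive (fun t' => X t' s) t (v1 (X t s) (Y t s) t) ->
  is_derive (fun t' => Y t' s) t (v2 (X t s) (Y t s) t) ->
  is_derive (fun t' => f (X t' s) (Y t' s) t') t (mat_deriv v1 v2 f (X t s) (Y t s) t).
Proof.
  intros Hf HX HY.
  eapply is_derive_val.
  - exact (chain3 f (fun t' => X t' s) (fun t' => Y t' s) (fun t' => t') t
             (v1 (X t s) (Y t s) t) (v2 (X t s) (Y t s) t) 1 (proj1 (Hf ((X t s, Y t s), t))) HX HY (is_derive_id' t)).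
  - unfold mat_deriv. cbv beta. set (A := d_x f _ _ _). set (B := d_y f _ _ _). set (C := d_t f _ _ _). ring.
Qed.

Lemma cont3_plus (f g : field) q :
  continuous (unc3 f) q -> continuous (unc3 g) q ->
  continuous (unc3 (fun x y t => f x y t + g x y t)) q.
Proof. intros. apply (continuous_plus (unc3 f) (unc3 g)); auto. Qed.

Lemma cont3_mult (f g : field) q :
  continuous (unc3 f) q -> continuous (unc3 g) q ->
  continuous (unc3 (fun x y t => f x y t * g x y t)) q.
Proof. intros. apply (continuous_mult (unc3 f) (unc3 g)); auto. Qed.

Lemma cont_matderiv (v1 v2 f : field) q :
  C1_field v1 -> C1_field v2 -> C1_field f ->
  continuous (unc3 (mat_deriv v1 v2 f)) q.
Proof.
  intros H1 H2 Hf. unfold mat_deriv.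
  destruct (Hf q) as [_ [Hx [Hy Ht]]].
  apply cont3_plus; [apply cont3_plus|].
  - exact Ht.
  - apply cont3_mult. apply C1_field_cont; auto. exact Hx.
  - apply cont3_mult. apply C1_field_cont; auto. exact Hy.
Qed.

Definition dS (X Y : R -> R -> R) (f : field) (t s : R) : R :=
  d_x f (X t s) (Y t s) t * p_s X t s + d_y f (X t s) (Y t s) t * p_s Y t s.

Definition dSt (v1 v2 : field) (X Y : R -> R -> R) (f : field) (t s : R) : R :=
  mat_deriv v1 v2 (d_x f) (X t s) (Y t s) t * p_s X t s
  + d_x f (X t s) (Y t s) t * p_t (p_s X) t s
  + (mat_deriv v1 v2 (d_y f) (X t s) (Y t s) t * p_s Y t s
  + d_y f (X t s) (Y t s) t * p_t (p_s Y) t s).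

Lemma is_derive_Rplus (f g : R -> R) (x df dg : R) :
  is_derive f x df -> is_derive g x dg -> is_derive (fun u => f u + g u) x (df + dg).
Proof. intros. exact (is_derive_plus f g x df dg H H0). Qed.

Lemma is_derive_Rmult (f g : R -> R) (x df dg : R) :
  is_derive f x df -> is_derive g x dg ->
  is_derive (fun u => f u * g u) x (df * g x + f x * dg).
Proof. intros. exact (is_derive_mult f g x df dg H H0 Rmult_comm). Qed.

Lemma dS_derive (X Y : R -> R -> R) (f : field) t s :
  C1_field f -> C1_map2 X -> C1_map2 Y ->
  is_derive (fun s' => f (X t s') (Y t s') t) s (dS X Y f t s).
Proof. intros. apply comp_ds; auto. Qed.

Lemma dSt_derive (v1 v2 : field) (X Y : R -> R -> R) (f : field) t s :
  C1_field (d_x f) -> C1_field (d_y f) -> C1_map2 (p_s X) -> C1_map2 (p_s Y) ->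
  is_derive (fun t' => X t' s) t (v1 (X t s) (Y t s) t) ->
  is_derive (fun t' => Y t' s) t (v2 (X t s) (Y t s) t) ->
  is_derive (fun t' => dS X Y f t' s) t (dSt v1 v2 X Y f t s).
Proof.
  intros H1 H2 H3 H4 HfX HfY. unfold dS, dSt.
  pose proof (comp_dt (d_x f) v1 v2 X Y t s H1 HfX HfY) as A1.
  pose proof (comp_dt (d_y f) v1 v2 X Y t s H2 HfX HfY) as A2.
  pose proof (der_pt (p_s X) t s H3) as B1.
  pose proof (der_pt (p_s Y) t s H4) as B2.
  pose proof (is_derive_Rmult _ _ t _ _ A1 B1) as C1.
  pose proof (is_derive_Rmult _ _ t _ _ A2 B2) as C2.
  exact (is_derive_Rplus _ _ t _ _ C1 C2).
Qed.

Lemma cont_dS (X Y : R -> R -> R) (f : field) q :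
  C1_field f -> C1_field (d_x f) -> C1_field (d_y f) -> C1_map2 X -> C1_map2 Y ->
  continuous (unc2 (dS X Y f)) q.
Proof.
  intros Hf Hfx Hfy HX HY. unfold dS.
  apply cont_plus2; apply cont_mult2.
  - apply (cont_comp2 X Y (d_x f)); auto. intros; apply C1_field_cont; auto.
  - apply (HX q).
  - apply (cont_comp2 X Y (d_y f)); auto. intros; apply C1_field_cont; auto.
  - apply (HY q).
Qed.

Lemma cont_dSt (v1 v2 : field) (X Y : R -> R -> R) (f : field) q :
  C1_field v1 -> C1_field v2 ->
  C1_field (d_x f) -> C1_field (d_y f) -> C1_map2 X -> C1_map2 Y ->
  C1_map2 (p_s X) -> C1_map2 (p_s Y) ->
  continuous (unc2 (dSt v1 v2 X Y f)) q.
Proof.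
  intros Hv1 Hv2 Hfx Hfy HX HY HXs HYs. unfold dSt.
  apply cont_plus2; apply cont_plus2; apply cont_mult2.
  - apply (cont_comp2 X Y (mat_deriv v1 v2 (d_x f))); auto.
    intros; apply cont_matderiv; auto.
  - apply (HX q).
  - apply (cont_comp2 X Y (d_x f)); auto. intros; apply C1_field_cont; auto.
  - apply (HXs q).
  - apply (cont_comp2 X Y (mat_deriv v1 v2 (d_y f))); auto.
    intros; apply cont_matderiv; auto.
  - apply (HY q).
  - apply (cont_comp2 X Y (d_y f)); auto. intros; apply C1_field_cont; auto.
  - apply (HYs q).
Qed.

From Stdlib Require Import FunctionalExtensionality.

Lemma cont2d_of (h : R -> R -> R) x y :
  continuous (unc2 h) (x, y) -> continuity_2d_pt h x y.
Proof. intros H. apply continuity_2d_pt_filterlim. exact H. Qed.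

Lemma schwarz_Z (v1 v2 zeta w : field) (X Y : R -> R -> R) t s :
  C1_field v1 -> C1_field v2 -> C1_field w ->
  C1_field zeta -> C1_field (d_x zeta) -> C1_field (d_y zeta) ->
  C1_field (d_x w) -> C1_field (d_y w) ->
  C1_map2 X -> C1_map2 Y -> C1_map2 (p_s X) -> C1_map2 (p_s Y) ->
  (forall t s, is_derive (fun t' => X t' s) t (v1 (X t s) (Y t s) t)) ->
  (forall t s, is_derive (fun t' => Y t' s) t (v2 (X t s) (Y t s) t)) ->
  (forall x y t, mat_deriv v1 v2 zeta x y t = w x y t) ->
  dSt v1 v2 X Y zeta t s = dS X Y w t s.
Proof.
  intros Hv1 Hv2 Hw Hz Hzx Hzy Hwx Hwy HX HY HXs HYs HfX HfY Hwave.
  set (F := fun u v => zeta (X u v) (Y u v) u).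
  assert (DS : forall u v, Derive (fun z => F u z) v = dS X Y zeta u v).
  { intros u v. apply is_derive_unique. apply dS_derive; auto. }
  assert (DTd : forall u v, is_derive (fun z => F z v) u (w (X u v) (Y u v) u)).
  { intros u v. rewrite <- Hwave. apply comp_dt; auto. }
  assert (DT : forall u v, Derive (fun z => F z v) u = w (X u v) (Y u v) u).
  { intros u v. apply is_derive_unique. apply DTd. }
  assert (E1 : forall u v, Derive (fun z => Derive (fun t => F z t) v) u = dSt v1 v2 X Y zeta u v).
  { intros u v. rewrite (Derive_ext _ (fun z => dS X Y zeta z v)).
    - apply is_derive_unique. apply dSt_derive; auto.
    - intros; apply DS. }
  assert (E2 : forall u v, Derive (fun z => Derive (fun t => F t z) u) v = dS X Y w u v).
  { intros u v. rewrite (Derive_ext _ (fun z => w (X u z) (Y u z) u)).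
    - apply is_derive_unique. apply dS_derive; auto.
    - intros; apply DT. }
  pose proof (Schwarz F t s) as HS.
  rewrite E1, E2 in HS. apply HS.
  - exists (mkposreal 1 Rlt_0_1). intros u v _ _. split; [|split; [|split]].
    + eexists; apply DTd.
    + eexists; apply dS_derive; auto.
    + apply ex_derive_ext with (f := fun z => dS X Y zeta z v).
      * intros; symmetry; apply DS.
      * eexists; apply dSt_derive; auto.
    + apply ex_derive_ext with (f := fun z => w (X u z) (Y u z) u).
      * intros; symmetry; apply DT.
      * eexists; apply dS_derive; auto.
  - replace (fun u v => Derive (fun z => Derive (fun t0 => F z t0) v) u)
      with (dSt v1 v2 X Y zeta).
    + apply cont2d_of. apply cont_dSt; auto.
    + apply functional_extensionality; intro u.
      apply functional_extensionality; intro v. symmetry; apply E1.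
  - replace (fun u v => Derive (fun z => Derive (fun t0 => F t0 z) u) v)
      with (dS X Y w).
    + apply cont2d_of. apply cont_dS; auto.
    + apply functional_extensionality; intro u.
      apply functional_extensionality; intro v. symmetry; apply E2.
Qed.

Lemma G_deriv (sigma2 : R) (v1 v2 zeta w : field) (X Y : R -> R -> R) t :
  C1_field v1 -> C1_field v2 -> C1_field w ->
  C1_field zeta -> C1_field (d_x zeta) -> C1_field (d_y zeta) ->
  C1_field (d_x w) -> C1_field (d_y w) ->
  C1_map2 X -> C1_map2 Y -> C1_map2 (p_s X) -> C1_map2 (p_s Y) ->
  (forall t s, is_derive (fun t' => X t' s) t (v1 (X t s) (Y t s) t)) ->
  (forall t s, is_derive (fun t' => Y t' s) t (v2 (X t s) (Y t s) t)) ->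
  (forall x y t, mat_deriv v1 v2 zeta x y t = w x y t) ->
  is_derive (fun t' => oint X Y t' (fun x y t0 => sigma2 * w x y t0) zeta) t
    (RInt (fun s => sigma2 * (mat_deriv v1 v2 w (X t s) (Y t s) t * dS X Y zeta t s
                              + w (X t s) (Y t s) t * dS X Y w t s)) 0 1).
Proof.
  intros Hv1 Hv2 Hw Hz Hzx Hzy Hwx Hwy HX HY HXs HYs HfX HfY Hwave.
  set (gg := fun u s => sigma2 * w (X u s) (Y u s) u * dS X Y zeta u s).
  set (dgg := fun u s => sigma2 * mat_deriv v1 v2 w (X u s) (Y u s) u * dS X Y zeta u s
                         + sigma2 * w (X u s) (Y u s) u * dSt v1 v2 X Y zeta u s).
  assert (Dgg : forall u s, is_derive (fun z => gg z s) u (dgg u s)).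
  { intros u s. unfold gg, dgg.
    pose proof (comp_dt w v1 v2 X Y u s Hw (HfX u s) (HfY u s)) as A.
    pose proof (is_derive_scal _ u sigma2 _ A) as A'.
    pose proof (dSt_derive v1 v2 X Y zeta u s Hzx Hzy HXs HYs (HfX u s) (HfY u s)) as B.
    exact (is_derive_Rmult _ _ u _ _ A' B). }
  assert (Cgg : forall q, continuous (unc2 gg) q).
  { intros q. unfold gg. apply cont_mult2; [apply cont_mult2|].
    - apply cont_const2.
    - apply (cont_comp2 X Y w); auto. intros; apply C1_field_cont; auto.
    - apply cont_dS; auto. }
  assert (Cdgg : forall q, continuous (unc2 dgg) q).
  { intros q. unfold dgg. apply cont_plus2; apply cont_mult2; try apply cont_mult2.
    - apply cont_const2.
    - apply (cont_comp2 X Y (mat_deriv v1 v2 w)); auto. intros; apply cont_matderiv; auto.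
    - apply cont_dS; auto.
    - apply cont_const2.
    - apply (cont_comp2 X Y w); auto. intros; apply C1_field_cont; auto.
    - apply cont_dSt; auto. }
  apply is_derive_ext with (f := fun t' => RInt (fun s => gg t' s) 0 1).
  { intros t'. unfold oint, gg. apply RInt_ext. intros s _.
    f_equal. symmetry. apply is_derive_unique. apply dS_derive; auto. }
  eapply is_derive_val.
  - apply is_derive_RInt_param.
    + apply filter_forall. intros x0 s _. eexists. apply Dgg.
    + intros s _.
      replace (fun u v => Derive (fun z => gg z v) u) with dgg.
      * apply cont2d_of. apply Cdgg.
      * apply functional_extensionality; intro u.
        apply functional_extensionality; intro v. symmetry.
        apply is_derive_unique, Dgg.
    + apply filter_forall. intros y. apply (@ex_RInt_continuous R_CompleteNormedModule).
      intros s _. apply cont_slice. apply Cgg.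
  - apply RInt_ext. intros s _.
    transitivity (dgg t s); [apply is_derive_unique; apply Dgg|]. unfold dgg.
    rewrite (schwarz_Z v1 v2 zeta w X Y t s); auto.
    set (A := mat_deriv v1 v2 w (X t s) (Y t s) t).
    set (B := dS X Y zeta t s). set (C := w (X t s) (Y t s) t).
    set (D := dS X Y w t s). match goal with |- ?a = ?b => change (@eq R a b) end. ring.
Qed.

Lemma sqd (f : R -> R) (s df : R) :
  is_derive f s df -> is_derive (fun s' => f s' ^ 2) s (2 * df * f s).
Proof.
  intros H. eapply is_derive_val. apply (is_derive_pow f 2 s df H).
  simpl. ring.
Qed.

Lemma RInt_comb (h f g : R -> R) (al be : R) :
  ex_RInt f 0 1 -> ex_RInt g 0 1 ->
  (forall s, 0 <= s <= 1 -> h s = al * f s + be * g s) ->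
  RInt h 0 1 = al * RInt f 0 1 + be * RInt g 0 1.
Proof.
  intros Hf Hg Hh.
  apply is_RInt_unique.
  apply is_RInt_ext with (f := fun s => plus (scal al (f s)) (scal be (g s))).
  { intros s Hs. rewrite Rmin_left in Hs by lra. rewrite Rmax_right in Hs by lra.
    symmetry. apply Hh. lra. }
  pose proof (@RInt_correct R_CompleteNormedModule f 0 1 Hf) as A.
  pose proof (@RInt_correct R_CompleteNormedModule g 0 1 Hg) as B.
  pose proof (@is_RInt_scal R_NormedModule f 0 1 al _ A) as A'.
  pose proof (@is_RInt_scal R_NormedModule g 0 1 be _ B) as B'.
  exact (@is_RInt_plus R_NormedModule _ _ 0 1 _ _ A' B').
Qed.

Lemma RInt_ext01 (h f : R -> R) :
  (forall s, 0 <= s <= 1 -> h s = f s) -> RInt h 0 1 = RInt f 0 1.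
Proof.
  intros H. apply RInt_ext. intros s Hs.
  rewrite Rmin_left in Hs by lra. rewrite Rmax_right in Hs by lra.
  apply H. lra.
Qed.

Lemma ex_RInt_cont2 (h : R -> R -> R) t :
  (forall q, continuous (unc2 h) q) -> ex_RInt (fun s => h t s) 0 1.
Proof.
  intros H. apply (@ex_RInt_continuous R_CompleteNormedModule).
  intros s _. apply cont_slice. apply H.
Qed.

Lemma final_alg (K1 K2 G T1 T2 IA IB IC ID k sg : R) :
  K1 = -1 * IA + - k * IB ->
  K2 = 1 * IC + sg * ID ->
  G = - k * IB + sg * ID ->
  T1 = IA -> T2 = IC ->
  K1 + K2 - G = - (T1 - T2).
Proof. intros; subst; ring. Qed.

Lemma ext_alg (a b c : R) : a + b + c - c = a + b.
Proof. ring. Qed.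

Definition pA (p rho : field) (X Y : R -> R -> R) (t s : R) :=
  / rho (X t s) (Y t s) t * dS X Y p t s.
Definition pB (zeta rho : field) (X Y : R -> R -> R) (t s : R) :=
  / rho (X t s) (Y t s) t * (zeta (X t s) (Y t s) t * dS X Y zeta t s).
Definition pC (v1 v2 : field) (X Y : R -> R -> R) (t s : R) :=
  v1 (X t s) (Y t s) t * dS X Y v1 t s + v2 (X t s) (Y t s) t * dS X Y v2 t s.
Definition pD (w : field) (X Y : R -> R -> R) (t s : R) :=
  w (X t s) (Y t s) t * dS X Y w t s.

Lemma K1pt (p zeta rho : field) (X Y : R -> R -> R) (t s rho_ref Fr2 : R) :
  C1_field p -> C1_field zeta -> C1_map2 X -> C1_map2 Y ->
  (forall x y t, 0 < rho x y t) -> 0 < Fr2 ->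
  (fun x y t0 => - / rho x y t0) (X t s) (Y t s) t *
   Derive (fun s' => (fun x y t0 => p x y t0 + rho_ref * (zeta x y t0) ^ 2 / (2 * Fr2))
                       (X t s') (Y t s') t) s
  = -1 * pA p rho X Y t s + - (rho_ref / Fr2) * pB zeta rho X Y t s.
Proof.
  intros Hp Hz HX HY Hr HF.
  assert (D : is_derive (fun s' : R => p (X t s') (Y t s') t + rho_ref * (zeta (X t s') (Y t s') t) ^ 2 / (2 * Fr2)) s
     (dS X Y p t s + (rho_ref * (2 * dS X Y zeta t s * zeta (X t s) (Y t s) t) * / (2 * Fr2)
                      + rho_ref * (zeta (X t s) (Y t s) t) ^ 2 * 0))).
  { pose proof (dS_derive X Y p t s Hp HX HY) as H1.
    pose proof (sqd _ s _ (dS_derive X Y zeta t s Hz HX HY)) as H2.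
    pose proof (is_derive_scal _ s rho_ref _ H2) as H3.
    pose proof (is_derive_Rmult _ (fun _ => / (2 * Fr2)) s _ 0 H3 (is_derive_const' _ s)) as H4.
    pose proof (is_derive_Rplus _ _ s _ _ H1 H4) as H5.
    exact H5. }
  cbv beta. rewrite (is_derive_unique _ _ _ D). unfold pA, pB.
  assert (Hr0 := Hr (X t s) (Y t s) t).
  set (a := dS X Y p t s). set (b := dS X Y zeta t s).
  set (z := zeta (X t s) (Y t s) t). set (r := rho (X t s) (Y t s) t) in *.
  field. split; lra.
Qed.

Lemma K2pt (v1 v2 w : field) (X Y : R -> R -> R) (t s sigma2 : R) :
  C1_field v1 -> C1_field v2 -> C1_field w -> C1_map2 X -> C1_map2 Y ->
  one_field (X t s) (Y t s) t *
   Derive (fun s' => (fun x y t0 => / 2 * ((v1 x y t0) ^ 2 + (v2 x y t0) ^ 2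
                                    + sigma2 * (w x y t0) ^ 2)) (X t s') (Y t s') t) s
  = 1 * pC v1 v2 X Y t s + sigma2 * pD w X Y t s.
Proof.
  intros Hv1 Hv2 Hw HX HY.
  assert (D : is_derive (fun s' : R => / 2 * ((v1 (X t s') (Y t s') t) ^ 2 + (v2 (X t s') (Y t s') t) ^ 2
                                    + sigma2 * (w (X t s') (Y t s') t) ^ 2)) s
     (/ 2 * (2 * dS X Y v1 t s * v1 (X t s) (Y t s) t + 2 * dS X Y v2 t s * v2 (X t s) (Y t s) t
             + sigma2 * (2 * dS X Y w t s * w (X t s) (Y t s) t)))).
  { pose proof (sqd _ s _ (dS_derive X Y v1 t s Hv1 HX HY)) as H1.
    pose proof (sqd _ s _ (dS_derive X Y v2 t s Hv2 HX HY)) as H2.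
    pose proof (sqd _ s _ (dS_derive X Y w t s Hw HX HY)) as H3.
    pose proof (is_derive_scal _ s sigma2 _ H3) as H3'.
    pose proof (is_derive_Rplus _ _ s _ _ H1 H2) as H12.
    pose proof (is_derive_Rplus _ _ s _ _ H12 H3') as H123.
    exact (is_derive_scal _ s (/ 2) _ H123). }
  cbv beta. rewrite (is_derive_unique _ _ _ D). unfold pC, pD, one_field.
  set (a := dS X Y v1 t s). set (b := dS X Y v2 t s). set (c := dS X Y w t s).
  set (u1 := v1 (X t s) (Y t s) t). set (u2 := v2 (X t s) (Y t s) t).
  set (ww := w (X t s) (Y t s) t).
  field.
Qed.

Lemma T1pt (p rho : field) (X Y : R -> R -> R) (t s : R) :
  C1_field p -> C1_map2 X -> C1_map2 Y ->
  (fun x y t0 => / rho x y t0) (X t s) (Y t s) t *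
   Derive (fun s' => p (X t s') (Y t s') t) s = pA p rho X Y t s.
Proof.
  intros Hp HX HY. cbv beta.
  assert (D : is_derive (fun s' : R => p (X t s') (Y t s') t) s (dS X Y p t s)).
  { exact (dS_derive X Y p t s Hp HX HY). }
  rewrite (is_derive_unique _ _ _ D). reflexivity.
Qed.

Lemma T2pt (v1 v2 : field) (X Y : R -> R -> R) (t s : R) :
  C1_field v1 -> C1_field v2 -> C1_map2 X -> C1_map2 Y ->
  one_field (X t s) (Y t s) t *
   Derive (fun s' => (fun x y t0 => ((v1 x y t0) ^ 2 + (v2 x y t0) ^ 2) / 2)
                       (X t s') (Y t s') t) s
  = pC v1 v2 X Y t s.
Proof.
  intros Hv1 Hv2 HX HY.
  assert (D : is_derive (fun s' : R => ((v1 (X t s') (Y t s') t) ^ 2 + (v2 (X t s') (Y t s') t) ^ 2) / 2) s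
     ((2 * dS X Y v1 t s * v1 (X t s) (Y t s) t + 2 * dS X Y v2 t s * v2 (X t s) (Y t s) t) * / 2
      + ((v1 (X t s) (Y t s) t) ^ 2 + (v2 (X t s) (Y t s) t) ^ 2) * 0)).
  { pose proof (sqd _ s _ (dS_derive X Y v1 t s Hv1 HX HY)) as H1.
    pose proof (sqd _ s _ (dS_derive X Y v2 t s Hv2 HX HY)) as H2.
    pose proof (is_derive_Rplus _ _ s _ _ H1 H2) as H12.
    exact (is_derive_Rmult _ (fun _ => / 2) s _ 0 H12 (is_derive_const' _ s)). }
  cbv beta. rewrite (is_derive_unique _ _ _ D). unfold pC, one_field.
  set (a := dS X Y v1 t s). set (b := dS X Y v2 t s).
  set (u1 := v1 (X t s) (Y t s) t). set (u2 := v2 (X t s) (Y t s) t).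
  field.
Qed.

Lemma Gpt (v1 v2 zeta w rho : field) (X Y : R -> R -> R) (t s sigma2 rho_ref Fr2 : R) :
  0 < sigma2 -> 0 < Fr2 -> (forall x y t, 0 < rho x y t) ->
  (forall x y t, mat_deriv v1 v2 w x y t = - (rho_ref * zeta x y t / (sigma2 * Fr2 * rho x y t))) ->
  sigma2 * (mat_deriv v1 v2 w (X t s) (Y t s) t * dS X Y zeta t s
            + w (X t s) (Y t s) t * dS X Y w t s)
  = - (rho_ref / Fr2) * pB zeta rho X Y t s + sigma2 * pD w X Y t s.
Proof.
  intros Hs HF Hr Hw. rewrite Hw. unfold pB, pD.
  assert (Hr0 := Hr (X t s) (Y t s) t).
  set (b := dS X Y zeta t s). set (c := dS X Y w t s).
  set (z := zeta (X t s) (Y t s) t). set (ww := w (X t s) (Y t s) t).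
  set (r := rho (X t s) (Y t s) t) in *.
  field. repeat split; lra.
Qed.

Lemma cont_rinv (rho : field) (X Y : R -> R -> R) q :
  C1_field rho -> (forall x y t, 0 < rho x y t) -> C1_map2 X -> C1_map2 Y ->
  continuous (unc2 (fun t s => / rho (X t s) (Y t s) t)) q.
Proof.
  intros Hr Hp HX HY. apply cont_inv2.
  - apply (cont_comp2 X Y rho); auto. intros; apply C1_field_cont; auto.
  - destruct q as [a b]. unfold unc2; simpl. apply Rgt_not_eq, Hp.
Qed.

Lemma ex_pA (p rho : field) X Y t :
  C2_field p -> C1_field rho -> (forall x y t, 0 < rho x y t) -> C1_map2 X -> C1_map2 Y ->
  ex_RInt (fun s => pA p rho X Y t s) 0 1.
Proof.
  intros [Hp [Hpx [Hpy _]]] Hr Hpos HX HY. apply (ex_RInt_cont2 (pA p rho X Y)).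
  intros q. unfold pA. apply cont_mult2.
  - apply cont_rinv; auto.
  - apply cont_dS; auto.
Qed.

Lemma ex_pB (zeta rho : field) X Y t :
  C2_field zeta -> C1_field rho -> (forall x y t, 0 < rho x y t) -> C1_map2 X -> C1_map2 Y ->
  ex_RInt (fun s => pB zeta rho X Y t s) 0 1.
Proof.
  intros [Hp [Hpx [Hpy _]]] Hr Hpos HX HY. apply (ex_RInt_cont2 (pB zeta rho X Y)).
  intros q. unfold pB. apply cont_mult2; [|apply cont_mult2].
  - apply cont_rinv; auto.
  - apply (cont_comp2 X Y zeta); auto. intros; apply C1_field_cont; auto.
  - apply cont_dS; auto.
Qed.

Lemma ex_pD (w : field) X Y t :
  C2_field w -> C1_map2 X -> C1_map2 Y ->
  ex_RInt (fun s => pD w X Y t s) 0 1.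
Proof.
  intros [Hp [Hpx [Hpy _]]] HX HY. apply (ex_RInt_cont2 (pD w X Y)).
  intros q. unfold pD. apply cont_mult2.
  - apply (cont_comp2 X Y w); auto. intros; apply C1_field_cont; auto.
  - apply cont_dS; auto.
Qed.

Lemma ex_pC (v1 v2 : field) X Y t :
  C2_field v1 -> C2_field v2 -> C1_map2 X -> C1_map2 Y ->
  ex_RInt (fun s => pC v1 v2 X Y t s) 0 1.
Proof.
  intros [Hp [Hpx [Hpy _]]] [Hq [Hqx [Hqy _]]] HX HY. apply (ex_RInt_cont2 (pC v1 v2 X Y)).
  intros q. unfold pC. apply cont_plus2; apply cont_mult2.
  - apply (cont_comp2 X Y v1); auto. intros; apply C1_field_cont; auto.
  - apply cont_dS; auto.
  - apply (cont_comp2 X Y v2); auto. intros; apply C1_field_cont; auto.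
  - apply cont_dS; auto.
Qed.
Theorem mainTheorem2
  (sigma2 Fr2 rho_ref : R) (v1 v2 zeta w p rho : field) (X Y : R -> R -> R)
  (* constants *)
  (Hsigma : 0 < sigma2) (HFr : 0 < Fr2) (Hrhoref : 0 < rho_ref)
  (* regularity of the fields *)
  (Hv1 : C2_field v1) (Hv2 : C2_field v2) (Hzeta : C2_field zeta)
  (Hw : C2_field w) (Hp : C2_field p) (Hrho : C2_field rho)
  (Hrho_pos : forall x y t, 0 < rho x y t)
  (* D = 1, i.e. div v = 0 *)
  (Hdiv : forall x y t, d_x v1 x y t + d_y v2 x y t = 0)
  (* the buoyancy is advected by the horizontal flow *)
  (Hrho_adv : forall x y t, mat_deriv v1 v2 rho x y t = 0)
  (* wave equations *)
  (Hwave_w : forall x y t,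
      mat_deriv v1 v2 w x y t = - (rho_ref * zeta x y t / (sigma2 * Fr2 * rho x y t)))
  (Hwave_zeta : forall x y t, mat_deriv v1 v2 zeta x y t = w x y t)
  (* the loop c(t) : s in [0,1] |-> (X t s, Y t s), closed and moving with v *)
  (HX : C2_map2 X) (HY : C2_map2 Y)
  (Hclosed : forall t, X t 0 = X t 1 /\ Y t 0 = Y t 1)
  (HflowX : forall t s, is_derive (fun t' => X t' s) t (v1 (X t s) (Y t s) t))
  (HflowY : forall t s, is_derive (fun t' => Y t' s) t (v2 (X t s) (Y t s) t))
  (* the full Kelvin circulation theorem for this model, along the loop *)
  (Hkelvin : forall t,
      is_derive
        (fun t' => oint X Y t' v1 xcoord + oint X Y t' v2 ycoord
                   + oint X Y t' (fun x y t0 => sigma2 * w x y t0) zeta)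
        t
        (oint X Y t (fun x y t0 => - / rho x y t0)
              (fun x y t0 => p x y t0 + rho_ref * (zeta x y t0) ^ 2 / (2 * Fr2))
         + oint X Y t one_field
              (fun x y t0 => / 2 * ((v1 x y t0) ^ 2 + (v2 x y t0) ^ 2
                                    + sigma2 * (w x y t0) ^ 2)))) :
  (* Kelvin circulation theorem for the current alone *)
  forall t,
    is_derive (fun t' => oint X Y t' v1 xcoord + oint X Y t' v2 ycoord) t
      (- (oint X Y t (fun x y t0 => / rho x y t0) p
          - oint X Y t one_field (fun x y t0 => ((v1 x y t0) ^ 2 + (v2 x y t0) ^ 2) / 2))).
Proof.
  intros t.
  assert (Hv1c := proj1 Hv1). assert (Hv2c := proj1 Hv2).
  assert (Hwc := proj1 Hw). assert (Hzc := proj1 Hzeta).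
  assert (Hpc := proj1 Hp). assert (Hrc := proj1 Hrho).
  assert (Hzx := proj1 (proj2 Hzeta)). assert (Hzy := proj1 (proj2 (proj2 Hzeta))).
  assert (Hwx := proj1 (proj2 Hw)). assert (Hwy := proj1 (proj2 (proj2 Hw))).
  assert (HX1 := proj1 HX). assert (HY1 := proj1 HY).
  assert (HXs := proj2 (proj2 HX)). assert (HYs := proj2 (proj2 HY)).
  pose proof (G_deriv sigma2 v1 v2 zeta w X Y t Hv1c Hv2c Hwc Hzc Hzx Hzy Hwx Hwy
                HX1 HY1 HXs HYs HflowX HflowY Hwave_zeta) as HG.
  pose proof (Hkelvin t) as HK.
  pose proof (is_derive_minus _ _ t _ _ HK HG) as HM.
  apply is_derive_ext with
    (f := fun t' => oint X Y t' v1 xcoord + oint X Y t' v2 ycoord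
                    + oint X Y t' (fun x y t0 => sigma2 * w x y t0) zeta
                    - oint X Y t' (fun x y t0 => sigma2 * w x y t0) zeta).
  { intros t'. apply ext_alg. }
  eapply is_derive_val. exact HM.
  apply (final_alg _ _ _ _ _
           (RInt (fun s => pA p rho X Y t s) 0 1)
           (RInt (fun s => pB zeta rho X Y t s) 0 1)
           (RInt (fun s => pC v1 v2 X Y t s) 0 1)
           (RInt (fun s => pD w X Y t s) 0 1)
           (rho_ref / Fr2) sigma2).
  - unfold oint. apply RInt_comb.
    + apply ex_pA; auto.
    + apply ex_pB; auto.
    + intros s _. apply K1pt; auto.
  - unfold oint. apply RInt_comb.
    + apply ex_pC; auto.
    + apply ex_pD; auto.
    + intros s _. apply K2pt; auto.
  - apply RInt_comb.
    + apply ex_pB; auto.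
    + apply ex_pD; auto.
    + intros s _. apply Gpt; auto.
  - unfold oint. apply RInt_ext01. intros s _. apply T1pt; auto.
  - unfold oint. apply RInt_ext01. intros s _. apply T2pt; auto.
Qed.
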